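(* Let $n=2^k$ with $k\ge 2$ an integer. If an $n\times n$ matrix $\Sigma$ with entries $\pm1$ has vanishing permanent, then the number $\mu(\Sigma)$ of entries of $\Sigma$ equal to $-1$ is even.
   Context: The permanent of $\Sigma=[\sigma_{ij}]$ is $\sum_{\lambda\in\mathrm{Sym}(n)}\sigma_{1,\lambda(1)}\cdots\sigma_{n,\lambda(n)}$. *)

(* Defs.v *)
From mathcomp Require Import all_boot all_order all_algebra all_fingroup.
Set Implicit Arguments. Unset Strict Implicit. Unset Printing Implicit Defensive.
Import GRing.Theory Num.Theory.
Local Open Scope ring_scope.

Definition permanent (R : comRingType) (n : nat) (A : 'M[R]_n) : R :=
  \sum_(s : 'S_n) \prod_(i < n) A i (s i).

Definition mu (R : ringType) (n : nat) (A : 'M[R]_n) : nat :=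
  #|[set ij : 'I_n * 'I_n | A ij.1 ij.2 == -1]|.

(* Main.v *)
Require Import Defs.
From mathcomp Require Import all_boot all_order all_algebra all_fingroup.
From mathcomp Require Import zify ring.
Set Implicit Arguments. Unset Strict Implicit. Unset Printing Implicit Defensive.
Import GRing.Theory Num.Theory.
Local Open Scope ring_scope.
Local Close Scope ring_scope.
Definition oddp (a : nat) : nat := \prod_(i < a) (2 * i).+1.

Lemma oddp_odd a : odd (oddp a).
Proof.
rewrite /oddp; elim: a => [|a IH]; first by rewrite big_ord0.
by rewrite big_ord_recr /= oddM IH /= ?oddS mul2n odd_double.
Qed.

Lemma fact_double a : (2 * a)`! = 2 ^ a * a`! * oddp a.
Proof.
rewrite /oddp; elim: a => [|a IH]; first by rewrite big_ord0.
rewrite big_ord_recr /=.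
have -> : 2 * a.+1 = (2 * a).+2 by lia.
rewrite !factS IH expnS.
set X := \prod_(i < a) _. set Y := a`!. set Z := 2 ^ a.
nia.
Qed.

Lemma fact_double1 a : (2 * a).+1`! = (2 * a).+1 * (2 ^ a * a`! * oddp a).
Proof. by rewrite factS fact_double. Qed.

Lemma C_lem k : forall r, r < 2 ^ k -> 2 ^ r %| r`! * 2 ^ k.
Proof.
elim: k => [|k IH] r.
  by rewrite expn0; case: r.
move=> hr.
have hr2 : r = odd r + 2 * r./2 by rewrite -[LHS]odd_double_half; lia.
have ha : r./2 < 2 ^ k by rewrite expnS in hr; lia.
have := IH _ ha; set a := r./2 => /dvdnP [q Hq].
move: hr2; case: (odd r) => /= ->.
  rewrite add1n fact_double1; apply/dvdnP; exists ((2 * a).+1 * q * oddp a).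
  have -> : 2 ^ (2 * a).+1 = 2 * (2 ^ a * 2 ^ a) by rewrite expnS -expnD addnn -mul2n.
  rewrite expnS.
  set Z := 2 ^ a. set K := 2 ^ k. set F := a`!. set O := oddp a.
  rewrite -/K -/Z -/F in Hq. rewrite -/a; clearbody Z K F O.
  transitivity ((2 * a).+1 * O * 2 * Z * (F * K)); first lia. rewrite Hq; lia.
rewrite add0n fact_double; apply/dvdnP; exists (q * oddp a * 2).
have -> : 2 ^ (2 * a) = 2 ^ a * 2 ^ a by rewrite -expnD addnn -mul2n.
rewrite expnS.
set Z := 2 ^ a. set K := 2 ^ k. set F := a`!. set O := oddp a.
rewrite -/K -/Z -/F in Hq; rewrite -/a; clearbody Z K F O.
transitivity (O * 2 * Z * (F * K)); first lia. rewrite Hq; lia.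
Qed.

Lemma D_lem k : forall r, r + 2 <= 2 ^ k.+1 -> 2 ^ r %| r`! * 2 ^ k.
Proof.
elim: k => [|k IH] r.
  by rewrite expn1 => h; have -> : r = 0 by lia.
move=> hr.
have hr2 : r = odd r + 2 * r./2 by rewrite -[LHS]odd_double_half; lia.
move: hr2 hr; case: (odd r) => /= -> hr; set a := r./2 in hr *.
  have ha : a + 2 <= 2 ^ k.+1 by rewrite expnS in hr *; lia.
  have /dvdnP [q Hq] := IH _ ha.
  rewrite add1n fact_double1; apply/dvdnP; exists ((2 * a).+1 * q * oddp a).
  have -> : 2 ^ (2 * a).+1 = 2 * (2 ^ a * 2 ^ a) by rewrite expnS -expnD addnn -mul2n.
  rewrite expnS.
  set Z := 2 ^ a. set K := 2 ^ k. set F := a`!. set O := oddp a.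
  rewrite -/K -/Z -/F in Hq; clearbody Z K F O.
  transitivity ((2 * a).+1 * O * 2 * Z * (F * K)); first lia. rewrite Hq; lia.
have ha : a < 2 ^ k.+1 by rewrite !expnS in hr *; lia.
have /dvdnP [q Hq] := C_lem ha.
rewrite add0n fact_double; apply/dvdnP; exists (q * oddp a).
have -> : 2 ^ (2 * a) = 2 ^ a * 2 ^ a by rewrite -expnD addnn -mul2n.
set Z := 2 ^ a. set K := 2 ^ k.+1. set F := a`!. set O := oddp a.
rewrite -/K -/Z -/F in Hq; clearbody Z K F O.
transitivity (O * Z * (F * K)); first lia. rewrite Hq; lia.
Qed.

Lemma fact_pow k : exists o, odd o /\ (2 ^ k)`! = 2 ^ (2 ^ k).-1 * o.
Proof.
elim: k => [|k [o [oo Ho]]]; first by exists 1.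
exists (o * oddp (2 ^ k)); split; first by rewrite oddM oo oddp_odd.
rewrite expnS fact_double Ho.
have -> : (2 * 2 ^ k).-1 = 2 ^ k + (2 ^ k).-1 by have := expn_gt0 2 k; lia.
rewrite expnD. set X := 2 ^ (2 ^ k). set Y := 2 ^ (2 ^ k).-1. lia.
Qed.
Lemma bound_lem k m : 2 <= k -> m <= 2 ^ k -> m != 1 ->
  2 ^ (2 ^ k - k + 1) %| 2 ^ m * (2 ^ k - m)`!.
Proof.
move=> hk hm hm1.
have hkn : k.+1 < 2 ^ k.
  elim: k hk {hm} => // -[|[|k]] IH h //. rewrite expnS. 
  have := IH isT. lia.
case: m hm hm1 => [|[|m]] // hm _.
  have [o [_ Ho]] := fact_pow k.
  rewrite expn0 mul1n subn0 Ho; apply: dvdn_mulr; apply: dvdn_exp2l; lia.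
set r := 2 ^ k - m.+2.
have hr : r + 2 <= 2 ^ (k.-1).+1 by rewrite prednK; lia.
have := D_lem hr => hD.
rewrite -(@dvdn_pmul2r (2 ^ k.-1)) ?expn_gt0 //.
rewrite -expnD -mulnA.
have -> : 2 ^ k - k + 1 + k.-1 = m.+2 + r by rewrite /r; lia.
by rewrite expnD dvdn_pmul2l ?expn_gt0.
Qed.

Lemma final_lem k (mu : nat) : 2 <= k ->
  2 ^ (2 ^ k - k + 1) %| 2 * (2 ^ k).-1`! * mu -> ~~ odd mu.
Proof.
move=> hk hd.
have hkn : k.+1 < 2 ^ k.
  elim: k hk {hd} => // -[|[|k]] IH h //. rewrite expnS. 
  have := IH isT. lia.
have [o [oo Ho]] := fact_pow k.
have Hf : 2 ^ k * (2 ^ k).-1`! = 2 ^ k * (2 ^ ((2 ^ k).-1 - k) * o).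
  rewrite mulnA -expnD.
  have -> : k + ((2 ^ k).-1 - k) = (2 ^ k).-1 by lia.
  rewrite -Ho.
  by rewrite -[in RHS](@prednK (2 ^ k)) ?expn_gt0 // factS prednK ?expn_gt0.
move/eqP: Hf; rewrite eqn_pmul2l ?expn_gt0 // => /eqP Hf.
rewrite Hf in hd.
set e := (2 ^ k).-1 - k in hd.
have E : 2 ^ k - k + 1 = e.+2 by rewrite /e; lia.
rewrite E in hd.
have : 2 ^ e * 2 * 2 %| 2 ^ e * 2 * (o * mu).
  have <- : 2 ^ e.+2 = 2 ^ e * 2 * 2 by rewrite !expnS; lia.
  have <- : 2 * (2 ^ e * o) * mu = 2 ^ e * 2 * (o * mu) by lia.
  exact: hd.
rewrite dvdn_pmul2l ?muln_gt0 ?expn_gt0 // dvdn2 oddM oo /=.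
by [].
Qed.
Local Open Scope ring_scope.
Lemma rcoset_sum_dvd (gT : finGroupType) (H : {group gT}) (f : gT -> int) :
  (forall h x, h \in H -> f (h * x)%g = f x) -> (#|H|%:Z %| \sum_x f x)%Z.
Proof.
move=> fH.
rewrite (partition_big_imset (fun x => (H :* x)%g)) /=.
apply: rpred_sum => C /imsetP [y _ ->].
rewrite (eq_bigl (mem (H :* y)%g)); last first.
  by move=> x /=; apply/eqP/rcoset_eqP.
rewrite -rcosetE big_imset /=; last by move=> a b _ _ /mulIg.
rewrite (eq_bigr (fun _ => f y)); last by move=> h hH; rewrite fH.
rewrite sumr_const -mulr_natr; apply: dvdz_mull; rewrite natz; exact: dvdzz.
Qed.
Lemma per_expand n (A : 'M[int]_n) (c : 'I_n -> 'I_n -> int)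
  (hc : forall i j, A i j = c i j + 1) :
  permanent A = \sum_(J : {set 'I_n}) \sum_(s : 'S_n) \prod_(i in J) c i (s i).
Proof.
rewrite /permanent.
under eq_bigr => s _ do rewrite (eq_bigr _ (fun i _ => hc i (s i))) bigA_distr.
rewrite exchange_big /=; apply: eq_bigr => J _; apply: eq_bigr => s _.
by rewrite [RHS]big_mkcond.
Qed.

Lemma sum_stab_dvd n (J : {set 'I_n}) (b : 'I_n -> 'I_n -> int) :
  ((n - #|J|)`!%:Z %| \sum_(s : 'S_n) \prod_(i in J) b i (s i))%Z.
Proof.
have := @rcoset_sum_dvd _ (Sym_group (~: J)) (fun s => \prod_(i in J) b i (s i)).
rewrite card_Sym cardsCs card_ord setCK; apply => h x.
rewrite inE => hJ; apply: eq_bigr => i iJ; rewrite permM (out_perm hJ) //.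
by rewrite inE iJ.
Qed.

Lemma card_fix n (i j : 'I_n) : #|[set s : 'S_n | s i == j]| = (n.-1)`!.
Proof.
have -> : [set s : 'S_n | s i == j] = (fun s => s * tperm i j)%g @: [set s : 'S_n | s i == i].
  apply/setP => s; rewrite inE; apply/eqP/imsetP.
    move=> sij; exists (s * tperm i j)%g.
      by rewrite inE permM sij tpermR.
    by rewrite -mulgA; apply/permP => x; rewrite !permM tpermK.
  by move=> [t]; rewrite inE => /eqP ti ->; rewrite permM ti tpermL.
rewrite card_imset; last by move=> a b /mulIg.
have -> : [set s : 'S_n | s i == i] = Sym (~: [set i]).
  apply/setP => s; rewrite !inE; apply/eqP/subsetP.
    by move=> si x; rewrite !inE; apply: contra => /eqP ->; rewrite si.
  move=> h; apply/eqP; apply/negPn/negP => /h; by rewrite !inE eqxx.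
by rewrite card_Sym cardsC1 card_ord.
Qed.
Lemma mu_sum n (A : 'M[int]_n) :
  (mu A)%:Z = \sum_i \sum_j ((A i j == -1)%:R : int).
Proof.
rewrite /mu pair_big /= -sum1_card.
rewrite -natz natr_sum big_mkcond /=.
by apply: eq_bigr => p _; rewrite inE; case: (_ == _).
Qed.

Lemma row_sum n (i : 'I_n) (g : 'I_n -> int) :
  \sum_(s : 'S_n) g (s i) = (n.-1)`!%:Z * \sum_j g j.
Proof.
rewrite (partition_big (fun s : 'S_n => s i) xpredT) //= mulr_sumr.
apply: eq_bigr => j _.
rewrite (eq_bigl (fun s => s \in [set s : 'S_n | s i == j])); last by move=> s; rewrite inE.
rewrite (eq_bigr (fun _ => g j)); last by move=> s; rewrite inE => /eqP ->.
by rewrite sumr_const card_fix -mulr_natl natz.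
Qed.

Theorem proposition3p5 (k : nat) (hk : (2 <= k)%N) (Sigma : 'M[int]_(2 ^ k))
  (hpm : forall i j, Sigma i j = 1 \/ Sigma i j = -1)
  (hper : permanent Sigma = 0) :
  ~~ odd (mu Sigma).
Proof.
pose b := fun i j : 'I_(2 ^ k) => ((Sigma i j == -1)%:R : int).
pose c := fun i j => -2 * b i j.
have hc : forall i j, Sigma i j = c i j + 1.
  by move=> i j; rewrite /c /b; case: (hpm i j) => ->.
move: hper; rewrite (per_expand hc) (bigID (fun J : {set 'I_(2 ^ k)} => #|J| == 1%N)) /=.
rewrite big_cards1.
under eq_bigr => i _ do under eq_bigr => s _ do rewrite big_set1.
under eq_bigr => i _ do rewrite (row_sum i (c i)).
have E1 : \sum_i ((2 ^ k).-1`!%:Z * \sum_j c i j) = - ((2 * (2 ^ k).-1`! * mu Sigma)%N%:Z).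
  rewrite -mulr_sumr.
  under eq_bigr => i _ do rewrite /c -mulr_sumr.
  rewrite -mulr_sumr -mu_sum !PoszM; ring.
rewrite E1.
have E2 : ((2 ^ (2 ^ k - k + 1))%N%:Z %|
   \sum_(J : {set 'I_(2 ^ k)} | #|J| != 1%N) \sum_(s : 'S_(2 ^ k)) \prod_(i in J) c i (s i))%Z.
  apply: rpred_sum => J hJ.
  under eq_bigr => s _ do rewrite /c big_split /= prodr_const.
  rewrite -mulr_sumr.
  have /dvdzP [q Hq] := sum_stab_dvd J b. rewrite Hq.
  have hJn : (#|J| <= 2 ^ k)%N by have := max_card J; rewrite card_ord.
  have hB := bound_lem hk hJn hJ.
  have -> : (-2) ^+ #|J| * (q * (2 ^ k - #|J|)`!%:Z) =
     ((-1) ^+ #|J| * q) * ((2 ^ #|J| * (2 ^ k - #|J|)`!)%N%:Z).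
    rewrite PoszM -!natz natrX -mulN1r exprMn; ring.
  by apply: dvdz_mull.
move/eqP; rewrite addrC subr_eq0 => /eqP E3.
rewrite E3 in E2.
exact: final_lem hk E2.
Qed.
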